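(* Let $T$ be a session type with $\Delta\vdash T:\mathsf{s}^m$ satisfying the standing assumptions below. If $\llbracket T\rrbracket\xrightarrow{\alpha}p$ in the BPA labelled transition system over $\mathcal{E}_T$, then $p=\llbracket T'\rrbracket$ for some session type $T'$ with $T\xrightarrow{\alpha}T'$ in the session-type labelled transition system.
   Context: Session types: $T ::= \mathsf{Skip} \mid {!}B \mid {?}B \mid \oplus\{\ell:T_\ell\}_{\ell\in L} \mid \&\{\ell:T_\ell\}_{\ell\in L} \mid T;T \mid \mu a{:}\kappa.T \mid a$, with kinding: $\mathsf{Skip}:\mathsf{s}^{\mathsf{un}}$; ${!}B,{?}B:\mathsf{s}^{\mathsf{lin}}$ for message types $B$; choices $:\mathsf{s}^{\mathsf{lin}}$ when all branches are; $T;U:\mathsf{s}^{\mathsf{lin}}$ when both are; $\mu a{:}\kappa.T:\kappa$ when $T$ contractive on $a$ and $\Delta,a{:}\kappa\vdash T:\kappa$; variables by lookup in $\Delta$; subsumption. Terminated: $\mathsf{Skip}$; $T;U$ iff both terminated; $\mu a.T$ iff $T$ terminated. Contractive on $a$: $T\neq a$, for $T=U;V$, $U$ contractive on $a$ and if $U$ terminated then $V$ contractive on $a$; for $T=\mu b.T'$, $T'$ contractive on $a$. Standing assumptions: every $\mu$-bound variable occurs free in its body; bound variables are distinct. Session-type LTS: ${!}B\xrightarrow{!B}\mathsf{Skip}$, ${?}B\xrightarrow{?B}\mathsf{Skip}$, $\star\{\ell:T_\ell\}_{\ell\in L}\xrightarrow{\star k}T_k$ ($k\in L$), $b\xrightarrow{b}\mathsf{Skip}$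 for a free variable $b$; $\mu a.T\xrightarrow{\alpha}T'$ if $T[\mu a.T/a]\xrightarrow{\alpha}T'$; $T;U\xrightarrow{\alpha}T';U$ if $T\xrightarrow{\alpha}T'$; $T;U\xrightarrow{\alpha}U'$ if $T$ is terminated and $U\xrightarrow{\alpha}U'$. BPA processes $p ::= \alpha \mid X \mid p+p \mid p\cdot p \mid \varepsilon$ with LTS over equations $\mathcal E$: $\alpha\xrightarrow{\alpha}\varepsilon$; $p+q\xrightarrow{\alpha}p'$ if $p\xrightarrow{\alpha}p'$ (and symmetrically for $q$); $p\cdot q\xrightarrow{\alpha}p'\cdot q$ if $p\xrightarrow{\alpha}p'\neq\varepsilon$; $p\cdot q\xrightarrow{\alpha}q$ if $p\xrightarrow{\alpha}\varepsilon$; $X\xrightarrow{\alpha}p'$ if $X\triangleq p\in\mathcal E$ and $p\xrightarrow{\alpha}p'$. Operator $\odot$: $p\odot\varepsilon=p$, $\varepsilon\odot q=q$, else $p\cdot q$. Translation (each $\mu$-subterm $\mu a_i.T_i$ of $T$ gets a distinct variable $X_i$): $\llbracket\mathsf{Skip}\rrbracket=\varepsilon$, $\llbracket\sharp B\rrbracket=\sharp B$, $\llbracket\star\{\ell:T_\ell\}\rrbracket=\sum_\ell\star\ell\odot\llbracket T_\ell\rrbracket$, $\llbracket T;U\rrbracket=\llbracket T\rrbracket\odot\llbracket U\rrbracket$, $\llbracket b\rrbracket=b$ for free $b$, $\llbracket a_i\rrbracket=\llbracket\mu a_i.T_i\rrbracket=X_i$. Unravel: $\mathrm{unr}_\sigma(T;U)=\mathrm{unr}_\sigma(U)$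 if $\mathrm{unr}_\sigma(T)=\mathsf{Skip}$, else $\mathrm{unr}_\sigma(T);U$; $\mathrm{unr}_\sigma(\mu a.T)=\mathrm{unr}_{\sigma\circ[\mu a.T/a]}(T)$; $\mathrm{unr}_\sigma(T)=T$ otherwise. Equations: $\mathcal{E}_T=\{X_i\triangleq\llbracket\mathrm{unr}_{\mathrm{id}}(T_i)\rrbracket\}_i$. *)

(* Defs.v *)
From Stdlib Require Import List Arith.
Import ListNotations.
Set Implicit Arguments.

(* type variables (also used as BPA process variables X_a, named after the
   mu-bound type variable a they come from) *)
Definition tvar := nat.

Inductive mult := Un | Lin.
Inductive kind := KSession (m : mult).
Inductive pol := PInt | PExt.
Inductive dir := DOut | DIn.

Section Defs.
(* B : message types, L : labels *)
Variables (B L : Type).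

Inductive stype : Type :=
| TSkip
| TMsg (d : dir) (b : B)
| TChoice (p : pol) (br : list (L * stype))
| TSeq (T U : stype)
| TMu (a : tvar) (k : kind) (T : stype)
| TVar (a : tvar).

(* T[U/a] (no capture can occur under the standing assumptions) *)
Fixpoint subst (a : tvar) (U : stype) (T : stype) : stype :=
  match T with
  | TSkip => TSkip
  | TMsg d b => TMsg d b
  | TChoice p br => TChoice p (map (fun '(l, t) => (l, subst a U t)) br)
  | TSeq T1 T2 => TSeq (subst a U T1) (subst a U T2)
  | TMu b k T1 => if Nat.eqb a b then TMu b k T1 else TMu b k (subst a U T1)
  | TVar b => if Nat.eqb a b then U else TVar b
  end.

Fixpoint fv (T : stype) : list tvar :=
  match T with
  | TSkip => []
  | TMsg _ _ => []
  | TChoice _ br => flat_map (fun '(_, t) => fv t) br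
  | TSeq T1 T2 => fv T1 ++ fv T2
  | TMu a _ T1 => filter (fun b => negb (Nat.eqb a b)) (fv T1)
  | TVar a => [a]
  end.

Fixpoint musub (T : stype) : list (tvar * stype) :=
  match T with
  | TChoice _ br => flat_map (fun '(_, t) => musub t) br
  | TSeq T1 T2 => musub T1 ++ musub T2
  | TMu a _ T1 => (a, T1) :: musub T1
  | _ => []
  end.

Definition bv (T : stype) : list tvar := map fst (musub T).

Definition standing (T : stype) : Prop :=
  NoDup (bv T) /\
  (forall a, In a (bv T) -> ~ In a (fv T)) /\
  (forall a T1, In (a, T1) (musub T) -> In a (fv T1)).

Fixpoint terminated (T : stype) : Prop :=
  match T with
  | TSkip => True
  | TSeq T1 T2 => terminated T1 /\ terminated T2
  | TMu _ _ T1 => terminated T1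
  | _ => False
  end.

Fixpoint contractive (a : tvar) (T : stype) : Prop :=
  match T with
  | TVar b => b <> a
  | TSeq U V => contractive a U /\ (terminated U -> contractive a V)
  | TMu _ _ T1 => contractive a T1
  | _ => True
  end.

Inductive subkind : kind -> kind -> Prop :=
| subk_refl k : subkind k k
| subk_un : subkind (KSession Un) (KSession Lin).

Fixpoint lookup (D : list (tvar * kind)) (a : tvar) : option kind :=
  match D with
  | [] => None
  | (b, k) :: D' => if Nat.eqb a b then Some k else lookup D' a
  end.

(* Delta |- T : kappa ; a choice {l : T_l}_{l in L} is a finite map from a
   nonempty label set, i.e. a nonempty list with distinct labels *)
Inductive has_kind : list (tvar * kind) -> stype -> kind -> Prop :=
| K_Skip D : has_kind D TSkip (KSession Un)
| K_Msg D d b : has_kind D (TMsg d b) (KSession Lin)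
| K_Choice D p br :
    br <> [] -> NoDup (map fst br) ->
    (forall l t, In (l, t) br -> has_kind D t (KSession Lin)) ->
    has_kind D (TChoice p br) (KSession Lin)
| K_Seq D T U :
    has_kind D T (KSession Lin) -> has_kind D U (KSession Lin) ->
    has_kind D (TSeq T U) (KSession Lin)
| K_Mu D a k T :
    contractive a T -> has_kind ((a, k) :: D) T k -> has_kind D (TMu a k T) k
| K_Var D a k : lookup D a = Some k -> has_kind D (TVar a) k
| K_Sub D T k k' : has_kind D T k -> subkind k k' -> has_kind D T k'.

Inductive action : Type :=
| AMsg (d : dir) (b : B)
| AChoice (p : pol) (l : L)
| AVar (a : tvar).

Inductive tstep : stype -> action -> stype -> Prop :=
| S_Msg d b : tstep (TMsg d b) (AMsg d b) TSkip
| S_Choice p br l t : In (l, t) br -> tstep (TChoice p br) (AChoice p l) t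
| S_Var b : tstep (TVar b) (AVar b) TSkip
| S_Mu a k T al T' :
    tstep (subst a (TMu a k T) T) al T' -> tstep (TMu a k T) al T'
| S_Seq1 T U al T' : tstep T al T' -> tstep (TSeq T U) al (TSeq T' U)
| S_Seq2 T U al U' : terminated T -> tstep U al U' -> tstep (TSeq T U) al U'.

Inductive proc : Type :=
| PAct (al : action)
| PVar (X : tvar)
| PSum (p q : proc)
| PSeq (p q : proc)
| PEps.

Definition odot (p q : proc) : proc :=
  match p, q with
  | _, PEps => p
  | PEps, _ => q
  | _, _ => PSeq p q
  end.

(* BPA LTS over a set of equations E (X =def p iff In (X, p) E) *)
Inductive pstep (E : list (tvar * proc)) : proc -> action -> proc -> Prop :=
| P_Act al : pstep E (PAct al) al PEps
| P_SumL p q al p' : pstep E p al p' -> pstep E (PSum p q) al p'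
| P_SumR p q al q' : pstep E q al q' -> pstep E (PSum p q) al q'
| P_Seq1 p q al p' : pstep E p al p' -> p' <> PEps -> pstep E (PSeq p q) al (PSeq p' q)
| P_Seq2 p q al : pstep E p al PEps -> pstep E (PSeq p q) al q
| P_Var X p al p' : In (X, p) E -> pstep E p al p' -> pstep E (PVar X) al p'.

Fixpoint psum (ps : list proc) : proc :=
  match ps with
  | [] => PEps (* never used: choices are nonempty *)
  | [p] => p
  | p :: ps' => PSum p (psum ps')
  end.

(* translation [[.]], relative to the list bvs of bound variables of the
   original type: the mu-subterm mu a_i.T_i gets process variable X_{a_i} *)
Fixpoint tr (bvs : list tvar) (T : stype) : proc :=
  match T with
  | TSkip => PEps
  | TMsg d b => PAct (AMsg d b)
  | TChoice p br =>
      psum (map (fun '(l, t) => odot (PAct (AChoice p l)) (tr bvs t)) br)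
  | TSeq T1 T2 => odot (tr bvs T1) (tr bvs T2)
  | TMu a _ _ => PVar a
  | TVar a => if existsb (Nat.eqb a) bvs then PVar a else PAct (AVar a)
  end.

(* unravel; sigma is a (pending) substitution, represented as a list of
   single substitutions, composition sigma o [U/a] being (a,U) :: sigma *)
Fixpoint unr (sigma : list (tvar * stype)) (T : stype) : stype :=
  match T with
  | TSeq T1 U =>
      match unr sigma T1 with
      | TSkip => unr sigma U
      | T1' => TSeq T1' U
      end
  | TMu a k T1 => unr ((a, TMu a k T1) :: sigma) T1
  | _ => T
  end.

Definition eqns (T : stype) : list (tvar * proc) :=
  map (fun '(a, Ti) => (a, tr (bv T) (unr [] Ti))) (musub T).

End Defs.

(* Main.v *)
Require Import Defs.
From Stdlib Require Import List Arith.
Import ListNotations.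

Arguments TSkip {B L}. Arguments TMsg {B L}. Arguments TVar {B L}.
Arguments TSeq {B L}. Arguments TMu {B L}.
Arguments PEps {B L}. Arguments PAct {B L}. Arguments PVar {B L}.
Arguments PSum {B L}. Arguments PSeq {B L}.

Section Main.
Variables B L : Type.
Variable M : list (tvar * stype B L).
Notation bvs := (map fst M).
Notation stp := (stype B L).
Notation prc := (proc B L).

Inductive Inst : list tvar -> stp -> stp -> Prop :=
| I_skip G : Inst G TSkip TSkip
| I_msg G d b : Inst G (TMsg d b) (TMsg d b)
| I_choice G p br br' : br <> [] -> InstL G br br' -> Inst G (TChoice p br) (TChoice p br')
| I_seq G S1 S2 S1' S2' : Inst G S1 S1' -> Inst G S2 S2' -> Inst G (TSeq S1 S2) (TSeq S1' S2')
| I_mu G a k Y Y' : In (a,Y) M -> Inst (a::G) Y Y' -> Inst G (TMu a k Y) (TMu a k Y')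
| I_var G a k Y Y' : In (a,Y) M -> ~ In a G -> Inst [a] Y Y' -> Inst G (TVar a) (TMu a k Y')
| I_fvar G a : (In a G \/ ~ In a bvs) -> Inst G (TVar a) (TVar a)
with InstL : list tvar -> list (L * stp) -> list (L * stp) -> Prop :=
| IL_nil G : InstL G [] []
| IL_cons G l t t' br br' : Inst G t t' -> InstL G br br' -> InstL G ((l,t)::br) ((l,t')::br').

Scheme Inst_mut := Induction for Inst Sort Prop
with InstL_mut := Induction for InstL Sort Prop.

Lemma existsb_In a l : existsb (Nat.eqb a) l = true <-> In a l.
Proof.
  rewrite existsb_exists. split.
  - intros [x [H1 H2]]. apply Nat.eqb_eq in H2. subst; auto.
  - intros H. exists a. split; auto. apply Nat.eqb_refl.
Qed.

Lemma in_fst {A C} (a : A) (y : C) l : In (a,y) l -> In a (map fst l).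
Proof. intro H. apply (in_map fst) in H. exact H. Qed.

Definition trb := tr (B:=B) (L:=L) bvs.

Lemma inst_tr : forall G S S', Inst G S S' -> trb S = trb S'.
Proof.
  apply (Inst_mut (fun G S S' _ => trb S = trb S')
    (fun G br br' _ => forall p, map (fun '(l, t) => odot (PAct (@AChoice B L p l)) (tr bvs t)) br =
                       map (fun '(l, t) => odot (PAct (@AChoice B L p l)) (tr bvs t)) br'));
  intros; unfold trb in *; cbn [tr map]; auto.
  - rewrite H. reflexivity.
  - rewrite H, H0; reflexivity.
  - apply in_fst in i. apply existsb_In in i. rewrite i. reflexivity.
  - rewrite H, H0. reflexivity.
Qed.

Lemma inst_G_equiv : forall G S S', Inst G S S' -> forall G', (forall x, In x G <-> In x G') -> Inst G' S S'.
Proof.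
  apply (Inst_mut (fun G S S' _ => forall G', (forall x, In x G <-> In x G') -> Inst G' S S')
    (fun G br br' _ => forall G', (forall x, In x G <-> In x G') -> InstL G' br br'));
  intros; try (constructor; eauto; fail).
  - apply I_mu; auto. apply H. intros x; simpl. rewrite H0. tauto.
  - eapply I_var; eauto. rewrite <- H0. auto.
  - apply I_fvar. rewrite <- H. auto.
Qed.

Lemma inst_var_weaken a N G : Inst [] (TVar a) N -> ~ In a G -> Inst G (TVar a) N.
Proof.
  intros H HG. inversion H; subst.
  - eapply I_var; eauto.
  - apply I_fvar. destruct H2 as [H2|H2]; [destruct H2|auto].
Qed.

Lemma remove_cons_neq a b G : a <> b -> remove Nat.eq_dec a (b::G) = b :: remove Nat.eq_dec a G.
Proof. intros. simpl. destruct (Nat.eq_dec a b); congruence. Qed.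

Lemma inst_subst : forall G Y Y', Inst G Y Y' -> forall a N, Inst [] (TVar a) N ->
  Inst (remove Nat.eq_dec a G) Y (subst a N Y').
Proof.
  apply (Inst_mut (fun G Y Y' _ => forall a N, Inst [] (TVar a) N ->
           Inst (remove Nat.eq_dec a G) Y (subst a N Y'))
    (fun G br br' _ => forall a N, Inst [] (TVar a) N ->
           InstL (remove Nat.eq_dec a G) br (map (fun '(l, t) => (l, subst a N t)) br')));
  intros; simpl; try (constructor; eauto; fail).
  -
    destruct (Nat.eqb_spec a0 a).
    + subst. apply I_mu; auto. eapply inst_G_equiv; eauto.
      intros x; simpl. split.
      * intros [->|Hx]; [left; auto|]. destruct (Nat.eq_dec x a); [left; auto|right; apply in_in_remove; auto].
      * intros [->|Hx]; [left; auto|right]. apply in_remove in Hx. tauto.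
    + apply I_mu; auto. specialize (H a0 N H0). rewrite remove_cons_neq in H; auto.
  -
    destruct (Nat.eqb_spec a0 a).
    + subst. eapply I_var; eauto. apply remove_In.
    + eapply I_var; eauto.
      * intro Hr. apply in_remove in Hr. tauto.
      * specialize (H a0 N H0). simpl in H. destruct (Nat.eq_dec a0 a); [congruence|]. exact H.
  - destruct (Nat.eqb_spec a0 a).
    + subst. apply inst_var_weaken; auto. apply remove_In.
    + apply I_fvar. destruct o; [left; apply in_in_remove; auto | right; auto].
Qed.

Lemma inst_term : forall G Y Z, Inst G Y Z -> terminated Y -> terminated Z.
Proof.
  induction 1; simpl; intros; try tauto.
Qed.

Lemma psum_eps (l : list prc) : psum l = PEps -> l = [] \/ In PEps l.
Proof.
  induction l as [|x l IH]; simpl; auto.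
  destruct l as [|y l']; intros H; [subst; right; left; auto| discriminate].
Qed.

Lemma odot_cases (p q : prc) :
  (q = PEps /\ odot p q = p) \/ (p = PEps /\ q <> PEps /\ odot p q = q) \/
  (p <> PEps /\ q <> PEps /\ odot p q = PSeq p q).
Proof. destruct p, q; simpl; intuition congruence. Qed.

Lemma inst_eps_term : forall G S S', Inst G S S' -> trb S = PEps -> terminated S'.
Proof.
  induction 1; unfold trb in *; cbn [tr terminated]; intros Ht; try discriminate; auto.
  - apply psum_eps in Ht. destruct Ht as [Ht|Ht].
    + destruct br; simpl in Ht; [congruence|discriminate].
    + apply in_map_iff in Ht. destruct Ht as [[l t] [Ht _]].
      destruct (odot_cases (PAct (AChoice B p l)) (tr bvs t)) as [[? E]|[[? [? E]]|[? [? E]]]];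
        rewrite E in Ht; discriminate.
  - destruct (odot_cases (tr bvs S1) (tr bvs S2)) as [[? E]|[[? [? E]]|[? [? E]]]];
      rewrite E in Ht; [split|split|]; auto; try discriminate.
  - destruct (existsb (Nat.eqb a) bvs); discriminate.
  - destruct (existsb (Nat.eqb a) bvs); discriminate.
Qed.


Lemma term_subst b (N X : stp) : terminated (subst b N X) -> terminated X \/ terminated N.
Proof.
  induction X; simpl; intros H; auto.
  - destruct H as [H1 H2]. destruct (IHX1 H1), (IHX2 H2); tauto.
  - destruct (Nat.eqb b a); simpl in H; auto.
  - destruct (Nat.eqb b a); simpl in H; auto.
Qed.

Lemma unr_sigma (X : stp) : forall s1 s2, unr s1 X = unr s2 X.
Proof.
  induction X; intros s1 s2; simpl; auto.
  rewrite (IHX1 s1 s2), (IHX2 s1 s2). reflexivity.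
Qed.

Lemma unr_skip_term (X : stp) : forall s, unr s X = TSkip -> terminated X.
Proof.
  induction X; intros s H; simpl in *; try discriminate; eauto.
  destruct (unr s X1) eqn:E; try discriminate. split; eauto.
Qed.

Lemma unr_inst (Y : stp) : forall Z, Inst [] Y Z -> exists Z0, Inst [] (unr [] Y) Z0 /\
  (forall al S'', tstep Z0 al S'' -> tstep Z al S'') /\ (terminated Z0 -> terminated Z).
Proof.
  induction Y; intros Z HI; simpl; try (exists Z; auto; fail).
  - inversion HI; subst.
    destruct (IHY1 _ H2) as [Z10 [HI1 [HS1 HT1]]].
    destruct (unr [] Y1) eqn:E;
    try (exists (TSeq Z10 S2'); split; [constructor; auto|split];
      [ intros al S'' Hs; inversion Hs; subst; [apply S_Seq1; auto | apply S_Seq2; auto]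
      | simpl; tauto]).
    destruct (IHY2 _ H4) as [Z20 [HI2 [HS2 HT2]]].
    exists Z20. split; auto.
    assert (terminated S1') by (eapply inst_term; eauto; eapply unr_skip_term; eauto).
    split.
    + intros. apply S_Seq2; auto.
    + simpl; auto.
  - inversion HI; subst.
    assert (HV : Inst [] (TVar a) (TMu a k Y')).
    { eapply I_var; eauto. }
    pose proof (inst_subst _ _ _ H5 a _ HV) as HS. simpl in HS.
    destruct (Nat.eq_dec a a); [|congruence].
    destruct (IHY _ HS) as [Z0 [HI0 [HS0 HT0]]].
    exists Z0. rewrite (unr_sigma Y _ []). split; auto. split.
    + intros. apply S_Mu. auto.
    + intros Ht. apply HT0 in Ht. apply term_subst in Ht. simpl. simpl in Ht. tauto.
Qed.


Lemma psum_step E (f : (L*stp) -> prc) br al p :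
  pstep E (psum (map f br)) al p -> exists x, In x br /\ pstep E (f x) al p.
Proof.
  induction br as [|x br IH]; simpl; intros H.
  - inversion H.
  - destruct br as [|y br'].
    + exists x; simpl; auto.
    + inversion H; subst.
      * exists x; simpl; auto.
      * destruct (IH H4) as [z [Hz Hs]]. exists z; simpl in *; tauto.
Qed.

Lemma act_step E (a : action B L) al p : pstep E (PAct a) al p -> al = a /\ p = PEps.
Proof. intros H; inversion H; auto. Qed.

Lemma choice_step E pl br al p : pstep E (trb (TChoice pl br)) al p ->
  exists l t, In (l,t) br /\ al = AChoice B pl l /\ p = trb t.
Proof.
  unfold trb; cbn [tr]. intros H. apply psum_step in H. destruct H as [[l t] [Hin Hs]].
  exists l, t. split; auto.
  destruct (odot_cases (PAct (AChoice B pl l)) (tr bvs t)) as [[Ht E']|[[Ht [? E']]|[? [? E']]]];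
    rewrite E' in Hs.
  - apply act_step in Hs. rewrite Ht. tauto.
  - discriminate.
  - inversion Hs; subst.
    + apply act_step in H3. tauto.
    + match goal with Hx : pstep _ (PAct _) _ PEps |- _ => apply act_step in Hx end. tauto.
Qed.

Lemma instL_in G br br' l t : InstL G br br' -> In (l,t) br -> exists t', In (l,t') br' /\ Inst G t t'.
Proof.
  induction 1; simpl; intros Hin; [tauto|].
  destruct Hin as [Hin|Hin].
  - inversion Hin; subst. exists t'; auto.
  - destruct (IHInstL Hin) as [t1 [? ?]]. exists t1; auto.
Qed.

Definition goal (S' : stp) al (p : prc) := exists S'', p = trb S'' /\ tstep S' al S''.

Lemma choice_case E pl br S' al p : Inst [] (TChoice pl br) S' ->
  pstep E (trb (TChoice pl br)) al p -> goal S' al p.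
Proof.
  intros HI Hs. apply choice_step in Hs. destruct Hs as [l [t [Hin [-> ->]]]].
  inversion HI; subst. destruct (instL_in _ _ _ _ _ H4 Hin) as [t' [Hin' HI']].
  exists t'. split; [apply inst_tr with (G:=[]); auto|]. apply S_Choice; auto.
Qed.

Lemma tr_seq (S1 S2 : stp) : trb S1 <> PEps -> trb S2 <> PEps -> trb (TSeq S1 S2) = PSeq (trb S1) (trb S2).
Proof.
  unfold trb; cbn [tr]. intros. destruct (odot_cases (tr bvs S1) (tr bvs S2)) as [[? E']|[[? [? E']]|[? [? E']]]];
  tauto.
Qed.

Lemma odot_eps_r (x : prc) : odot x PEps = x.
Proof. destruct x; reflexivity. Qed.
Lemma odot_eps_l (x : prc) : odot PEps x = x.
Proof. destruct x; reflexivity. Qed.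

Lemma seq_tr (q : prc) al p : q <> PEps ->
  (forall S S', trb S = q -> Inst [] S S' ->
     match S with TSeq S1 S2 => trb S1 <> PEps /\ trb S2 <> PEps | _ => True end -> goal S' al p) ->
  forall S S', trb S = q -> Inst [] S S' -> goal S' al p.
Proof.
  intros Hq HQ S. induction S; intros S' Htr HI; try (apply (HQ _ _ Htr HI); exact I).
  inversion HI as [| | | G0 S1x S2x S1' S2' HI1 HI2 | | |]; subst.
  destruct (odot_cases (trb S1) (trb S2)) as [[H1 E']|[[H1 [H2x E']]|[H1 [H2x E']]]].
  - assert (Hq1 : trb S1 = trb (TSeq S1 S2)) by (rewrite <- E'; reflexivity).
    destruct (IHS1 _ Hq1 HI1) as [S1'' [Hp Hs]].
    exists (TSeq S1'' S2'). split.
    + assert (H2e : trb S2' = PEps) by (rewrite <- (inst_tr _ _ _ HI2); auto). rewrite Hp. unfold trb in *; cbn [tr]. rewrite H2e, odot_eps_r. auto.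
    + apply S_Seq1; auto.
  - assert (Hq1 : trb S2 = trb (TSeq S1 S2)) by (rewrite <- E'; reflexivity).
    destruct (IHS2 _ Hq1 HI2) as [S2'' [Hp Hs]].
    exists S2''. split; auto. apply S_Seq2; auto. eapply inst_eps_term; eauto.
  - apply (HQ _ _ eq_refl HI); auto.
Qed.


Lemma nodup_fst_uniq (a : tvar) (y1 y2 : stp) l : NoDup (map fst l) -> In (a,y1) l -> In (a,y2) l -> y1 = y2.
Proof.
  induction l as [|[b y] l IH]; simpl; intros Hnd H1 H2; [tauto|].
  inversion Hnd; subst.
  destruct H1 as [H1|H1], H2 as [H2|H2].
  - congruence.
  - inversion H1; subst. apply in_fst in H2. tauto.
  - inversion H2; subst. apply in_fst in H1. tauto.
  - eauto.
Qed.

Lemma var_cont E X k Y Y' p0 al p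
  (HE : forall X p0, In (X,p0) E -> exists Y, In (X,Y) M /\ p0 = trb (unr [] Y))
  (HND : NoDup bvs) :
  In (X,Y) M -> Inst [X] Y Y' -> In (X,p0) E ->
  (forall S S', trb S = p0 -> Inst [] S S' -> goal S' al p) ->
  goal (TMu X k Y') al p.
Proof.
  intros HY HI HX IH.
  destruct (HE _ _ HX) as [Y0 [HY0 ->]].
  assert (Y0 = Y) by (eapply nodup_fst_uniq; eauto). subst Y0.
  assert (HV : Inst [] (TVar X) (TMu X k Y')) by (eapply I_var; eauto).
  pose proof (inst_subst _ _ _ HI X _ HV) as HS. simpl in HS.
  destruct (Nat.eq_dec X X); [|congruence].
  destruct (unr_inst _ _ HS) as [Z0 [HI0 [HS0 _]]].
  destruct (IH _ _ eq_refl HI0) as [S'' [Hp Hs]].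
  exists S''. split; auto. apply S_Mu. auto.
Qed.

Lemma main_step E
  (HE : forall X p0, In (X,p0) E -> exists Y, In (X,Y) M /\ p0 = trb (unr [] Y))
  (HND : NoDup bvs) :
  forall q al p, pstep E q al p -> forall S S', trb S = q -> Inst [] S S' -> goal S' al p.
Proof.
  intros q al p H. pose proof H as Hstep. revert Hstep.
  induction H; intros Hstep; apply seq_tr; try discriminate;
  intros S S' Htr HI Hm; destruct S;
  try (eapply choice_case; eauto; rewrite Htr; exact Hstep);
  try (unfold trb in Htr; cbn [tr] in Htr; discriminate);
  try (rewrite tr_seq in Htr by tauto; discriminate);
  try (unfold trb in Htr; cbn [tr] in Htr; destruct (existsb (Nat.eqb a) bvs); discriminate).
  -
    unfold trb in Htr; cbn [tr] in Htr. inversion Htr; subst. inversion HI; subst.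
    exists TSkip. split; [reflexivity|constructor].
  -
    unfold trb in Htr; cbn [tr] in Htr. destruct (existsb (Nat.eqb a) bvs) eqn:Ee; [discriminate|].
    inversion Htr; subst. inversion HI; subst.
    + match goal with Hm0 : In (a, _) M |- _ => apply in_fst in Hm0; apply existsb_In in Hm0 end. congruence.
    + exists TSkip. split; [reflexivity|constructor].
  -
    rewrite tr_seq in Htr by tauto. inversion Htr; subst.
    inversion HI as [| | | G0 S1x S2x S1' S2' HI1 HI2 | | |]; subst.
    destruct (IHpstep H _ _ eq_refl HI1) as [S1'' [Hp Hs]].
    exists (TSeq S1'' S2'). split; [|apply S_Seq1; auto].
    rewrite tr_seq; [ | congruence | ].
    + rewrite <- Hp, <- (inst_tr _ _ _ HI2). reflexivity.
    + rewrite <- (inst_tr _ _ _ HI2). tauto.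
  -
    rewrite tr_seq in Htr by tauto. inversion Htr; subst.
    inversion HI as [| | | G0 S1x S2x S1' S2' HI1 HI2 | | |]; subst.
    destruct (IHpstep H _ _ eq_refl HI1) as [S1'' [Hp Hs]].
    exists (TSeq S1'' S2'). split; [|apply S_Seq1; auto].
    pose proof (inst_tr _ _ _ HI2) as Ht2.
    unfold trb in *. cbn [tr]. rewrite <- Hp, odot_eps_l. exact Ht2.
  -
    unfold trb in Htr; cbn [tr] in Htr. inversion Htr; subst. inversion HI; subst.
    eapply var_cont; eauto.
  -
    unfold trb in Htr; cbn [tr] in Htr. destruct (existsb (Nat.eqb a) bvs) eqn:Ee; [|discriminate].
    inversion Htr; subst. inversion HI; subst.
    + eapply var_cont; eauto.
    + match goal with H4 : In _ [] \/ _ |- _ => destruct H4 as [H4|H4]; [destruct H4|] end. apply existsb_In in Ee. tauto.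
Qed.

Lemma inst_refl : forall D S k, has_kind D S k -> forall G, incl (musub S) M ->
  (forall a, In a (fv S) -> In a G \/ ~ In a bvs) -> Inst G S S.
Proof.
  induction 1; intros G Hinc Hfv; simpl in *.
  - constructor.
  - constructor.
  - constructor; auto.
    clear H. induction br as [|[l0 t0] br IHbr]; [constructor|].
    constructor.
    + apply (H2 l0 t0); simpl; auto.
      * intros x Hx. apply Hinc. simpl. apply in_or_app; auto.
      * intros a Ha. apply Hfv. simpl. apply in_or_app; auto.
    + inversion H0; subst. apply IHbr; auto.
      * intros l t Hin. apply (H1 l t); simpl; auto.
      * intros l t Hin. apply (H2 l t); simpl; auto.
      * intros x Hx. apply Hinc. simpl. apply in_or_app; auto.
      * intros a Ha. apply Hfv. simpl. apply in_or_app; auto.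
  - constructor.
    + apply IHhas_kind1; [intros x Hx; apply Hinc, in_or_app; auto|intros a Ha; apply Hfv, in_or_app; auto].
    + apply IHhas_kind2; [intros x Hx; apply Hinc, in_or_app; auto|intros a Ha; apply Hfv, in_or_app; auto].
  - constructor.
    + apply Hinc; simpl; auto.
    + apply IHhas_kind.
      * intros x Hx; apply Hinc; simpl; auto.
      * intros b Hb. destruct (Nat.eq_dec a b) as [e|n]; [left; simpl; auto|].
        assert (Hb2 : In b (filter (fun b0 => negb (Nat.eqb a b0)) (fv T))).
        { apply filter_In; split; auto. apply Nat.eqb_neq in n. rewrite n. reflexivity. }
        destruct (Hfv b Hb2) as [Hb'|Hb']; [left; simpl; auto|right; auto].
  - constructor. apply Hfv. simpl; auto.
  - auto.
Qed.

End Main.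

Theorem mainTheorem5 (B L : Type) (D : list (tvar * kind)) (m : mult)
  (T : stype B L) (al : action B L) (p : proc B L) :
  has_kind D T (KSession m) ->
  standing T ->
  pstep (eqns T) (tr (bv T) T) al p ->
  exists T' : stype B L, p = tr (bv T) T' /\ tstep T al T'.
Proof.
  intros HK [HND [Hfv _]] Hs.
  assert (HI : Inst B L (musub T) [] T T).
  { eapply inst_refl; eauto. apply incl_refl.
    intros a Ha. right. intro Hb. exact (Hfv a Hb Ha). }
  eapply (main_step B L (musub T) (eqns T)); eauto.
  intros X p0 Hin. unfold eqns in Hin. apply in_map_iff in Hin.
  destruct Hin as [[a Ti] [Heq Hin]]. inversion Heq; subst.
  exists Ti. split; auto.
reflexivity.
Qed.
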